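(* Let $\mathsf{B}$ be a partition of $\mathcal{P}([n])$ into branches of the form $\mathcal{B}=\mathcal{C}(I,E)$ with $I,E\subseteq[n]$ disjoint, and suppose for each $\mathcal{B}\in\mathsf{B}$ real numbers $\underline{v}_{\mathcal{B}}\le\overline{v}_{\mathcal{B}}$ satisfy $\underline{v}_{\mathcal{B}}\le v(S)\le\overline{v}_{\mathcal{B}}$ for all $S\in\mathcal{B}$. For $i\in[n]$ let $\mathsf{B}_{+i}:=\{\mathcal{C}(I,E)\in\mathsf{B}: i\in I\}$, $\mathsf{B}_{-i}:=\{\mathcal{C}(I,E)\in\mathsf{B}: i\in E\}$, and $\mathsf{B}_{\pm i}:=\mathsf{B}\setminus(\mathsf{B}_{+i}\cup\mathsf{B}_{-i})$. For $\mathcal{B}=\mathcal{C}(I,E)$ with $r:=|I|$, $s:=|I|+|E|$, put $\Lambda_{\mathcal{B}}:=\frac{1}{(s+1)\binom{s}{r}}$, $\Lambda^-_{\mathcal{B}}:=\Lambda_{\mathcal{B}}\frac{s+1}{r}$ (for $r\ge1$) and $\Lambda^+_{\mathcal{B}}:=\Lambda_{\mathcal{B}}\frac{s+1}{s-r}$ (for $s>r$). Then for every $i\in[n]$, $$\sum_{\mathcal{B}\in\mathsf{B}_{+i}}\Lambda^-_{\mathcal{B}}\underline{v}_{\mathcal{B}}+\sum_{\mathcal{B}\in\mathsf{B}_{\pm i}}\Lambda_{\mathcal{B}}(\underline{v}_{\mathcal{B}}-\overline{v}_{\mathcal{B}})-\sum_{\mathcal{B}\in\mathsf{B}_{-i}}\Lambda^+_{\mathcal{B}}\overline{v}_{\mathcal{B}}\;\le\;\varphi_i\;\le\;\sum_{\mathcal{B}\in\mathsf{B}_{+i}}\Lambda^-_{\mathcal{B}}\overline{v}_{\mathcal{B}}+\sum_{\mathcal{B}\in\mathsf{B}_{\pm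 i}}\Lambda_{\mathcal{B}}(\overline{v}_{\mathcal{B}}-\underline{v}_{\mathcal{B}})-\sum_{\mathcal{B}\in\mathsf{B}_{-i}}\Lambda^+_{\mathcal{B}}\underline{v}_{\mathcal{B}}.$$
   Context: Let $f:\mathbb{R}^n\to\mathbb{R}$, $\mathbf{x}\in\mathbb{R}^n$, $\mathcal{D}$ a distribution on $\mathbb{R}^n$, and $v(S):=\mathbb{E}_{\mathbf{z}\sim\mathcal{D}}[f(\mathbf{x}_S;\mathbf{z}_{\bar S})]$ for $S\subseteq[n]$, where $(\mathbf{x}_S;\mathbf{z}_{\bar S})_j=x_j$ if $j\in S$ and $z_j$ otherwise. $\omega(k):=\frac1n\binom{n-1}{k}^{-1}$, $\Delta_i(S):=v(S\cup\{i\})-v(S)$, $\varphi_i:=\sum_{S\subseteq[n]\setminus\{i\}}\omega(|S|)\Delta_i(S)$. For disjoint $I,E\subseteq[n]$, $\mathcal{C}(I,E):=\{S\subseteq[n]: I\subseteq S,\ E\cap S=\emptyset\}$. *)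

(* Defs.v *)
From HB Require Import structures.
From mathcomp Require Import all_boot all_order all_algebra.
From mathcomp Require Import all_classical all_reals all_analysis.
Set Implicit Arguments. Unset Strict Implicit. Unset Printing Implicit Defensive.
Import Order.TTheory GRing.Theory Num.Theory.
Local Open Scope ring_scope.

Definition mixv (R : Type) (n : nat) (x z : 'I_n -> R) (S : {set 'I_n}) : 'I_n -> R :=
  fun j => if j \in S then x j else z j.

(* v(S) = E_{z ~ D}[ f(x_S ; z_{\bar S}) ], where D is the law of the random
   vector Z : T -> R^n on the probability space (T, P). *)
Definition vfun (d : measure_display) (T : measurableType d) (R : realType)
  (P : probability T R) (n : nat) (f : ('I_n -> R) -> R) (x : 'I_n -> R)
  (Z : T -> 'I_n -> R) (S : {set 'I_n}) : R :=
  Rintegral P setT (fun t => f (mixv x (Z t) S)).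

Definition shap_w (R : realType) (n k : nat) : R :=
  n%:R^-1 * ('C(n.-1, k))%:R^-1.

Definition shapley (R : realType) (n : nat) (v : {set 'I_n} -> R) (i : 'I_n) : R :=
  \sum_(S : {set 'I_n} | i \notin S) shap_w R n #|S| * (v (i |: S) - v S).

Definition in_branch (n : nat) (b : {set 'I_n} * {set 'I_n}) (S : {set 'I_n}) : bool :=
  (b.1 \subset S) && [disjoint b.2 & S].

Definition branch_partition (n : nat) (B : {set {set 'I_n} * {set 'I_n}}) : Prop :=
  (forall b, b \in B -> [disjoint b.1 & b.2]) /\
  (forall S : {set 'I_n}, exists! b, b \in B /\ in_branch b S).

Definition Lam (R : realType) (n : nat) (b : {set 'I_n} * {set 'I_n}) : R :=
  let r := #|b.1| in let s := (#|b.1| + #|b.2|)%N in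
  (s.+1%:R * ('C(s, r))%:R)^-1.
Definition LamM (R : realType) (n : nat) (b : {set 'I_n} * {set 'I_n}) : R :=
  let r := #|b.1| in let s := (#|b.1| + #|b.2|)%N in
  Lam R b * (s.+1%:R / r%:R).
Definition LamP (R : realType) (n : nat) (b : {set 'I_n} * {set 'I_n}) : R :=
  let r := #|b.1| in let s := (#|b.1| + #|b.2|)%N in
  Lam R b * (s.+1%:R / (s - r)%:R).

(* Main.v *)
Require Import Defs.
From HB Require Import structures.
From mathcomp Require Import all_boot all_order all_algebra.
From mathcomp Require Import all_classical all_reals all_analysis.
From mathcomp Require Import ring lra zify.
Import Order.TTheory GRing.Theory Num.Theory.
Local Open Scope ring_scope.

Definition Bf (R : realType) (j l : nat) : R := (j`! * l`!)%:R / ((j + l).+1)`!%:R.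

Lemma fnz (R : realType) k : (k`!)%:R != 0 :> R.
Proof. by rewrite pnatr_eq0 -lt0n fact_gt0. Qed.

Ltac pos R r e := repeat (apply/andP; split); try exact: fnz; try assumption;
  try (apply: lt0r_neq0; have := ler0n R r; have := ler0n R e; lra).

Lemma Bf_step (R : realType) r e : Bf R r.+1 e + Bf R r e.+1 = Bf R r e.
Proof.
rewrite /Bf addSn addnS !factS !natrM.
move: (fnz R (r+e)) (fnz R r) (fnz R e).
move: (r + e)`! (r`!) (e`!) => F G H hF hG hH.
field. pos R r e.
Qed.

Lemma Bf_P (R : realType) r e : Bf R r e.+1 * ((r + e.+1).+1%:R / e.+1%:R) = Bf R r e.
Proof.
rewrite /Bf addnS !factS !natrM.
move: (fnz R (r+e)) (fnz R r) (fnz R e).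
move: (r + e)`! (r`!) (e`!) => F G H hF hG hH.
field. pos R r e.
Qed.

Lemma Bf_M (R : realType) r e : Bf R r.+1 e * ((r.+1 + e).+1%:R / r.+1%:R) = Bf R r e.
Proof.
rewrite /Bf addSn !factS !natrM.
move: (fnz R (r+e)) (fnz R r) (fnz R e).
move: (r + e)`! (r`!) (e`!) => F G H hF hG hH.
field. pos R r e.
Qed.

Lemma Lam_Bf (R : realType) r e : ((r + e).+1%:R * ('C(r + e, r))%:R)^-1 = Bf R r e.
Proof.
rewrite /Bf factS -(bin_fact (leq_addr e r)) addKn !natrM.
have h1 : ('C(r + e, r))%:R != 0 :> R by rewrite pnatr_eq0 -lt0n bin_gt0 leq_addr.
move: (fnz R r) (fnz R e) h1.
move: ('C(r+e,r)) (r`!) (e`!) => F G H hG hH hF.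
field. pos R r e.
Qed.

Lemma w_Bf (R : realType) m k : (k <= m)%N -> shap_w R m.+1 k = Bf R k (m - k).
Proof.
move=> km; rewrite /shap_w /Bf subnKC // factS -(bin_fact km) /= !natrM.
have h1 : ('C(m, k))%:R != 0 :> R by rewrite pnatr_eq0 -lt0n bin_gt0.
move: (fnz R k) (fnz R (m-k)) h1.
move: ('C(m,k)) (k`!) ((m-k)`!) => F G H hG hH hF.
field. pos R m k.
Qed.

Lemma inb_addI n (I E S : {set 'I_n}) j :
  in_branch (j |: I, E) S = in_branch (I, E) S && (j \in S).
Proof. by rewrite /in_branch /= finset.subUset finset.sub1set; case: (j \in S); rewrite ?andbT ?andbF. Qed.

Lemma inb_addE n (I E S : {set 'I_n}) j :
  in_branch (I, j |: E) S = in_branch (I, E) S && (j \notin S).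
Proof.
by rewrite /in_branch /= !finset.disjoints_subset finset.subUset finset.sub1set finset.in_setC; case: (j \in S); rewrite ?andbT ?andbF /=. 
Qed.

Lemma disjU1 n (A B : {set 'I_n}) j :
  [disjoint j |: A & B] = (j \notin B) && [disjoint A & B].
Proof. by rewrite !finset.disjoints_subset finset.subUset finset.sub1set finset.in_setC. Qed.

Lemma cardC_eq n (X : {set 'I_n}) : #|~: X| = (n - #|X|)%N.
Proof. have := cardsC X; rewrite card_ord; lia. Qed.

Lemma core (R : realType) n (a : nat) k : forall I E : {set 'I_n},
  #|~: (I :|: E)| = k -> [disjoint I & E] -> (a <= #|I|)%N -> (0 < #|E| + a)%N ->
  \sum_(S | in_branch (I,E) S) Bf R (#|S| - a) (n + a - 1 - #|S|)
  = Bf R (#|I| - a) (#|E| + a - 1).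
Proof.
elim: k => [|k IH] I E hk hd ha he.
  have hT : I :|: E = [set: 'I_n].
    have h0 : ~: (I :|: E) = finset.set0 by apply: finset.cards0_eq.
    by move/(congr1 (@finset.setC _)): h0; rewrite finset.setCK finset.setC0.
  have hc : (#|I| + #|E| = n)%N.
    have := cardsU I E; rewrite hT cardsT card_ord (disjoint_setI0 hd) cards0.
    have := leq_card_setU I E; rewrite hT cardsT card_ord. lia.
  rewrite (big_pred1 I).
    congr (Bf _ _ _); lia.
  move=> S /=; rewrite /in_branch /=; apply/andP/eqP.
    move=> [hIS hES]; apply/eqP; rewrite finset.eqEsubset hIS andbT.
    apply/fintype.subsetP => x hx.
    have : x \in I :|: E by rewrite hT.
    rewrite finset.in_setU => /orP [//|hxE].
    by move: hES; rewrite disjoint_sym => /disjointFr => /(_ _ hx); rewrite hxE.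
  by move=> ->; rewrite fintype.subxx disjoint_sym.
have [j hj] : exists j, j \in ~: (I :|: E).
  by apply/set0Pn; rewrite -card_gt0 hk.
move: hj; rewrite finset.in_setC finset.in_setU negb_or => /andP [hjI hjE].
rewrite (bigID (fun S : {set 'I_n} => j \in S)) /=.
rewrite (eq_bigl (fun S => in_branch (j |: I, E) S)); last by move=> S; rewrite inb_addI.
rewrite [X in _ + X](eq_bigl (fun S => in_branch (I, j |: E) S)); last by move=> S; rewrite inb_addE.
have cI : #|j |: I| = (#|I|).+1 by rewrite cardsU1 hjI.
have cE : #|j |: E| = (#|E|).+1 by rewrite cardsU1 hjE.
have cIE : #|I :|: E| = (n - k.+1)%N by move: hk; rewrite cardC_eq; have := max_card (I :|: E); rewrite card_ord; lia.
have hkn : (k.+1 <= n)%N by rewrite -hk; have := max_card (~: (I :|: E)); rewrite card_ord.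
have jIE : j \notin I :|: E by rewrite finset.in_setU negb_or hjI.
rewrite (IH (j |: I) E) //.
  - rewrite (IH I (j |: E)) //.
    + rewrite cI cE.
      have -> : (#|I|.+1 - a = (#|I| - a).+1)%N by lia.
      have -> : (#|E|.+1 + a - 1 = (#|E| + a - 1).+1)%N by lia.
      exact: Bf_step.
    + rewrite cardC_eq finset.setUCA cardsU1 jIE; lia.
    + by rewrite disjoint_sym disjU1 hjI disjoint_sym.
    + by rewrite cE; lia.
  - rewrite cardC_eq -finset.setUA cardsU1 jIE; lia.
  - by rewrite disjU1 hjE.
  - by rewrite cI; lia.
Qed.

Lemma reidx (R : realType) n (i : 'I_n) (Q : {set 'I_n} -> bool) (G : {set 'I_n} -> R) :
  \sum_(S : {set 'I_n} | (i \in S) && Q S) G S = \sum_(S : {set 'I_n} | (i \notin S) && Q (i |: S)) G (i |: S).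
Proof.
rewrite (reindex_onto (fun S : {set 'I_n} => i |: S) (fun S : {set 'I_n} => S :\ i)) /=.
  apply: eq_bigl => S; apply/idP/idP.
    move=> /andP [/andP [_ hQ] /eqP e].
    have : i \notin (i |: S) :\ i by rewrite !finset.inE eqxx.
    by rewrite e => ->.
  move=> /andP [hS hQ]; by rewrite finset.setU11 hQ (finset.setU1K hS) eqxx.
by move=> S /andP [hS _]; rewrite finset.setD1K.
Qed.

Lemma inb_free n (I E S : {set 'I_n}) i : i \notin I -> i \notin E ->
  in_branch (I, E) (i |: S) = in_branch (I, E) S.
Proof.
move=> hI hE; rewrite /in_branch /= disjoint_sym disjU1 hE /= [[disjoint S & E]]disjoint_sym.
congr (_ && _); apply/idP/idP.
  move/fintype.subsetP => h; apply/fintype.subsetP => x hx.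
  have := h x hx; rewrite finset.in_setU1 => /orP [/eqP e|//].
  by rewrite -e hx in hI.
move=> h; apply: (fintype.subset_trans h); exact: finset.subsetU1.
Qed.

Lemma part_sum (R : realType) n (B : {set {set 'I_n} * {set 'I_n}}) :
  (forall S : {set 'I_n}, exists! b, b \in B /\ in_branch b S) ->
  forall F : {set 'I_n} -> R,
  \sum_(S : {set 'I_n}) F S = \sum_(b in B) \sum_(S | in_branch b S) F S.
Proof.
move=> H F.
under [RHS]eq_bigr do rewrite big_mkcond.
rewrite exchange_big /=; apply: eq_bigr => S _.
have [b0 [[hb0 ib0] hu]] := H S.
rewrite (bigD1 b0) //= ib0 big1 ?addr0 // => b /andP [bB nb].
case: ifP => // ib; exfalso.
by have e := hu b (conj bB ib); rewrite e eqxx in nb.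
Qed.

Lemma w_ge0 (R : realType) n k : 0 <= shap_w R n k.
Proof. by rewrite /shap_w mulr_ge0 // invr_ge0 ler0n. Qed.

Lemma sumw0 (R : realType) m (I E : {set 'I_m.+1}) j : [disjoint I & E] -> j \in E ->
  \sum_(S | in_branch (I, E) S) shap_w R m.+1 #|S| = Bf R #|I| (#|E| - 1).
Proof.
move=> hd hj.
have -> : Bf R #|I| (#|E| - 1) = Bf R (#|I| - 0) (#|E| + 0 - 1) by rewrite subn0 addn0.
rewrite -(@core R _ 0 _ I E (erefl _) hd) //; last by rewrite addn0 card_gt0; apply/set0Pn; exists j.
apply: eq_bigr => S /andP [_ hES].
have hS : (#|S| <= m)%N.
  have : j \in ~: S by rewrite finset.in_setC (disjointFr hES hj).
  move=> hjS; have := cardsC S; rewrite card_ord.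
  have : (0 < #|~: S|)%N by rewrite card_gt0; apply/set0Pn; exists j.
  lia.
rewrite w_Bf //; congr (Bf _ _ _); lia.
Qed.

Lemma sumw1 (R : realType) m (I E : {set 'I_m.+1}) j : [disjoint I & E] -> j \in I ->
  \sum_(S | in_branch (I, E) S) shap_w R m.+1 (#|S| - 1) = Bf R (#|I| - 1) #|E|.
Proof.
move=> hd hj.
have hI : (1 <= #|I|)%N by rewrite card_gt0; apply/set0Pn; exists j.
have -> : Bf R (#|I| - 1) #|E| = Bf R (#|I| - 1) (#|E| + 1 - 1) by rewrite addnK.
rewrite -(@core R _ 1 _ I E (erefl _) hd) //; last by lia.
apply: eq_bigr => S /andP [hIS _].
have hS : (1 <= #|S|)%N by apply: (leq_trans hI); apply: subset_leq_card.
have := max_card S; rewrite card_ord => hSm.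
rewrite w_Bf; last by lia.
congr (Bf _ _ _); lia.
Qed.

Lemma LamM_val (R : realType) m (I E : {set 'I_m.+1}) i : [disjoint I & E] -> i \in I ->
  \sum_(S | in_branch (I, E) S) shap_w R m.+1 (#|S| - 1) = LamM R (I, E).
Proof.
move=> hd hi; rewrite (@sumw1 R m I E i hd hi) /LamM /Lam /=.
have : (0 < #|I|)%N by rewrite card_gt0; apply/set0Pn; exists i.
case: #|I| => // r _; rewrite Lam_Bf Bf_M subn1 /=; done.
Qed.

Lemma LamP_val (R : realType) m (I E : {set 'I_m.+1}) i : [disjoint I & E] -> i \in E ->
  \sum_(S | in_branch (I, E) S) shap_w R m.+1 #|S| = LamP R (I, E).
Proof.
move=> hd hi; rewrite (@sumw0 R m I E i hd hi) /LamP /Lam /=.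
have : (0 < #|E|)%N by rewrite card_gt0; apply/set0Pn; exists i.
case: #|E| => // e _; rewrite addKn Lam_Bf Bf_P subn1 /=; done.
Qed.

Lemma Lam_val (R : realType) m (I E : {set 'I_m.+1}) i : [disjoint I & E] -> i \notin I -> i \notin E ->
  \sum_(S | in_branch (I, E) S && (i \notin S)) shap_w R m.+1 #|S| = Lam R (I, E).
Proof.
move=> hd hI hE.
under eq_bigl do rewrite -inb_addE.
rewrite (@sumw0 R m I (i |: E) i); first last.
- exact: finset.setU11.
- by rewrite disjoint_sym disjU1 hI disjoint_sym.
by rewrite cardsU1 hE add1n subn1 /= /Lam /= Lam_Bf.
Qed.

Lemma main_gen (R : realType) (n : nat) (v : {set 'I_n} -> R)
  (B : {set {set 'I_n} * {set 'I_n}})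
  (lo hi : {set 'I_n} * {set 'I_n} -> R) :
  branch_partition B ->
  (forall b, b \in B -> lo b <= hi b) ->
  (forall b S, b \in B -> in_branch b S -> lo b <= v S <= hi b) ->
  forall i : 'I_n,
    \sum_(b in B | i \in b.1) LamM R b * lo b
    + \sum_(b in B | (i \notin b.1) && (i \notin b.2)) Lam R b * (lo b - hi b)
    - \sum_(b in B | i \in b.2) LamP R b * hi b
    <= shapley v i <=
    \sum_(b in B | i \in b.1) LamM R b * hi b
    + \sum_(b in B | (i \notin b.1) && (i \notin b.2)) Lam R b * (hi b - lo b)
    - \sum_(b in B | i \in b.2) LamP R b * lo b.
Proof.
move=> [hdis hpart] hlh hb i.
case: n v B lo hi hdis hpart hlh hb i => [|m] v B lo hi hdis hpart hlh hb i; first by case: i.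
pose F (S : {set 'I_m.+1}) := if i \in S then shap_w R m.+1 (#|S| - 1)%N * v S else - (shap_w R m.+1 #|S| * v S).
have hsh : shapley v i = \sum_(S : {set 'I_m.+1}) F S.
  rewrite /shapley.
  under [LHS]eq_bigr do rewrite mulrBr.
  rewrite [RHS](bigID (fun S : {set 'I_m.+1} => i \in S)) /=.
  rewrite sumrB; congr (_ + _).
    have -> : \sum_(S : {set 'I_m.+1} | i \in S) F S = \sum_(S : {set 'I_m.+1} | (i \in S) && true) F S.
      by apply: eq_bigl => S; rewrite andbT.
    rewrite reidx; apply: eq_big => [S|S hS]; first by rewrite andbT.
    by rewrite /F finset.setU11 cardsU1 hS add1n subn1.
  rewrite -sumrN; apply: eq_bigr => S hS; by rewrite /F (negbTE hS).
rewrite hsh (@part_sum R _ B hpart F).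
pose G b := \sum_(S : {set 'I_m.+1} | in_branch b S) F S.
have hsplit : \sum_(b in B) G b = \sum_(b in B | i \in b.1) G b
   + \sum_(b in B | (i \notin b.1) && (i \notin b.2)) G b + \sum_(b in B | i \in b.2) G b.
  rewrite (bigID (fun b : {set 'I_m.+1} * {set 'I_m.+1} => i \in b.1)) /=.
  rewrite [X in _ + X](bigID (fun b : {set 'I_m.+1} * {set 'I_m.+1} => i \in b.2)) /=.
  rewrite [X in _ + X = _]addrC addrA.
  have -> : \sum_(b | (b \in B) && (i \notin b.1) && (i \in b.2)) G b = \sum_(b in B | i \in b.2) G b.
    apply: eq_bigl => b; case hbB: (b \in B) => //=.
    case h2: (i \in b.2); rewrite ?andbT ?andbF //=.
    by rewrite (disjointFl (hdis _ hbB) h2).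
  have -> : \sum_(b | (b \in B) && (i \notin b.1) && (i \notin b.2)) G b
     = \sum_(b in B | (i \notin b.1) && (i \notin b.2)) G b.
    by apply: eq_bigl => b; rewrite andbA.
  by [].
rewrite hsplit.
have h1 : forall b, b \in B -> i \in b.1 -> LamM R b * lo b <= G b <= LamM R b * hi b.
  move=> [I E] hB /= hI; have hd := hdis _ hB.
  have eG : G (I, E) = \sum_(S : {set 'I_m.+1} | in_branch (I, E) S) shap_w R m.+1 (#|S| - 1)%N * v S.
    apply: eq_bigr => S /andP [hIS _].
    by rewrite /F (fintype.subsetP hIS _ hI).
  rewrite eG -(@LamM_val R m I E i hd hI) !mulr_suml.
  apply/andP; split; apply: ler_sum => S hS; apply: ler_wpM2l; try exact: w_ge0;
    by have /andP [] := hb _ _ hB hS.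
have h3 : forall b, b \in B -> i \in b.2 -> - (LamP R b * hi b) <= G b <= - (LamP R b * lo b).
  move=> [I E] hB /= hE; have hd := hdis _ hB.
  have eG : G (I, E) = - \sum_(S : {set 'I_m.+1} | in_branch (I, E) S) shap_w R m.+1 #|S| * v S.
    rewrite -sumrN; apply: eq_bigr => S /andP [_ hES].
    by rewrite /F (disjointFr hES hE).
  rewrite eG -(@LamP_val R m I E i hd hE) !mulr_suml !lerN2.
  apply/andP; split; apply: ler_sum => S hS; apply: ler_wpM2l; try exact: w_ge0;
    by have /andP [] := hb _ _ hB hS.
have h2 : forall b, b \in B -> (i \notin b.1) && (i \notin b.2) ->
    Lam R b * (lo b - hi b) <= G b <= Lam R b * (hi b - lo b).
  move=> [I E] hB /= /andP [hI hE]; have hd := hdis _ hB.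
  have eG : G (I, E) = \sum_(S : {set 'I_m.+1} | in_branch (I, E) S && (i \notin S))
      shap_w R m.+1 #|S| * (v (i |: S) - v S).
    rewrite /G (bigID (fun S : {set 'I_m.+1} => i \in S)) /=.
    have -> : \sum_(S : {set 'I_m.+1} | in_branch (I, E) S && (i \in S)) F S
        = \sum_(S : {set 'I_m.+1} | (i \in S) && in_branch (I, E) S) F S.
      by apply: eq_bigl => S; rewrite andbC.
    rewrite reidx.
    have -> : \sum_(S : {set 'I_m.+1} | (i \notin S) && in_branch (I, E) (i |: S)) F (i |: S)
        = \sum_(S : {set 'I_m.+1} | in_branch (I, E) S && (i \notin S)) shap_w R m.+1 #|S| * v (i |: S).
      apply: eq_big => [S|S]; first by rewrite inb_free // andbC.
      by move=> /andP [hS _]; rewrite /F finset.setU11 cardsU1 hS add1n subn1.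
    rewrite -big_split; apply: eq_bigr => S /andP [_ hS].
    by rewrite /F (negbTE hS) mulrBr.
  rewrite eG -(@Lam_val R m I E i hd hI hE) !mulr_suml.
  apply/andP; split; apply: ler_sum => S /andP [hS hiS]; apply: ler_wpM2l; try exact: w_ge0;
    have /andP [a1 a2] := hb _ _ hB hS;
    have /andP [a3 a4] := hb _ _ hB (etrans (@inb_free _ I E S i hI hE) hS); lra.
have s1 : \sum_(b in B | i \in b.1) LamM R b * lo b <= \sum_(b in B | i \in b.1) G b
    <= \sum_(b in B | i \in b.1) LamM R b * hi b.
  by apply/andP; split; apply: ler_sum => b /andP [hB hib];
    have /andP [] := h1 _ hB hib.
have s2 : \sum_(b in B | (i \notin b.1) && (i \notin b.2)) Lam R b * (lo b - hi b)
    <= \sum_(b in B | (i \notin b.1) && (i \notin b.2)) G b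
    <= \sum_(b in B | (i \notin b.1) && (i \notin b.2)) Lam R b * (hi b - lo b).
  by apply/andP; split; apply: ler_sum => b /andP [hB hib];
    have /andP [] := h2 _ hB hib.
have s3 : - \sum_(b in B | i \in b.2) LamP R b * hi b <= \sum_(b in B | i \in b.2) G b
    <= - \sum_(b in B | i \in b.2) LamP R b * lo b.
  rewrite -!sumrN.
  by apply/andP; split; apply: ler_sum => b /andP [hB hib];
    have /andP [] := h3 _ hB hib.
move: s1 s2 s3 => /andP [a1 a2] /andP [a3 a4] /andP [a5 a6].
apply/andP; split; lra.
Qed.

Theorem mainTheorem7 (R : realType) (n : nat)
  (d : measure_display) (T : measurableType d) (P : probability T R)
  (f : ('I_n -> R) -> R) (x : 'I_n -> R) (Z : T -> 'I_n -> R)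
  (B : {set {set 'I_n} * {set 'I_n}})
  (lo hi : {set 'I_n} * {set 'I_n} -> R) :
  branch_partition B ->
  (forall b, b \in B -> lo b <= hi b) ->
  (forall b S, b \in B -> in_branch b S ->
     lo b <= vfun P f x Z S <= hi b) ->
  forall i : 'I_n,
    \sum_(b in B | i \in b.1) LamM R b * lo b
    + \sum_(b in B | (i \notin b.1) && (i \notin b.2)) Lam R b * (lo b - hi b)
    - \sum_(b in B | i \in b.2) LamP R b * hi b
    <= shapley (vfun P f x Z) i <=
    \sum_(b in B | i \in b.1) LamM R b * hi b
    + \sum_(b in B | (i \notin b.1) && (i \notin b.2)) Lam R b * (hi b - lo b)
    - \sum_(b in B | i \in b.2) LamP R b * lo b.
Proof.
move=> hB hlh hb i.
exact: (@main_gen R n (vfun P f x Z) B lo hi hB hlh hb i).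
Qed.
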